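(* Let $\Sigma$ be a real symmetric positive definite $n\times n$ matrix, let \[\mathcal S(\Sigma)=\{(\hat\Sigma,\tilde\Sigma)\mid \Sigma=\hat\Sigma+\tilde\Sigma,\ \hat\Sigma\ge0,\ \tilde\Sigma\ge 0,\ \tilde\Sigma\text{ diagonal}\},\] let $(\hat\Sigma_{\rm opt},\tilde\Sigma_{\rm opt})$ be the (unique) maximizer over $\mathcal S(\Sigma)$ of $\operatorname{trace}(\hat\Sigma-\hat\Sigma\Sigma^{-1}\hat\Sigma)$, and let $R_{\rm opt}=\hat\Sigma_{\rm opt}-\hat\Sigma_{\rm opt}\Sigma^{-1}\hat\Sigma_{\rm opt}$. Then for every $(\hat\Sigma,\tilde\Sigma)\in\mathcal S(\Sigma)$, \[\operatorname{trace}\big((\hat\Sigma-\hat\Sigma_{\rm opt})\Sigma^{-1}(\hat\Sigma-\hat\Sigma_{\rm opt})'\big)\le\operatorname{trace}(R_{\rm opt}).\]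
   Context: All matrices are real symmetric $n\times n$; $M\ge0$ means positive semidefinite. The maximizer $\hat\Sigma_{\rm opt}$ is also the maximizer of $\min_K L(K,\hat\Sigma,\tilde\Sigma)$ with $L(K,\hat\Sigma,\tilde\Sigma)=\operatorname{trace}(\hat\Sigma-K\hat\Sigma-\hat\Sigma K'+K(\hat\Sigma+\tilde\Sigma)K')$. *)

(* Defs.v *)
From HB Require Import structures.
From mathcomp Require Import all_boot all_order all_algebra.
Set Implicit Arguments. Unset Strict Implicit. Unset Printing Implicit Defensive.
Import Order.TTheory GRing.Theory Num.Theory.
Local Open Scope ring_scope.

Definition psd (R : realFieldType) (n : nat) (A : 'M[R]_n) : Prop :=
  A^T = A /\ forall v : 'cV[R]_n, 0 <= (v^T *m A *m v) 0 0.

Definition pd (R : realFieldType) (n : nat) (A : 'M[R]_n) : Prop :=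
  A^T = A /\ forall v : 'cV[R]_n, v != 0 -> 0 < (v^T *m A *m v) 0 0.

Definition inS (R : realFieldType) (n : nat) (Sigma Sh St : 'M[R]_n) : Prop :=
  Sigma = Sh + St /\ psd Sh /\ psd St /\ is_diag_mx St.

Definition objective (R : realFieldType) (n : nat) (Sigma Sh : 'M[R]_n) : R :=
  \tr (Sh - Sh *m invmx Sigma *m Sh).

(* Main.v *)
Require Import Defs.
From HB Require Import structures.
From mathcomp Require Import all_boot all_order all_algebra.
From mathcomp Require Import ring lra.
Import Order.TTheory GRing.Theory Num.Theory.
Local Open Scope ring_scope.

Set Implicit Arguments.
Section S.
Variables (R : realFieldType) (n : nat).
Implicit Types A B M : 'M[R]_n.

Lemma tr_psd_ge0 A M : psd A -> 0 <= \tr (M *m A *m M^T).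
Proof.
move=> [_ HA]; rewrite /mxtrace; apply: sumr_ge0 => i _.
have -> : (M *m A *m M^T) i i = ((row i M)^T^T *m A *m (row i M)^T) 0 0.
  rewrite !mxE; apply: eq_bigr => j _; rewrite !mxE; congr (_ * _).
  by apply: eq_bigr => k _; rewrite !mxE.
exact: HA.
Qed.

Lemma pd_unit A : pd A -> A \in unitmx.
Proof.
move=> [_ HA]; rewrite unitmxE unitfE; apply/negP => /det0P [v nv vA].
have : 0 < (v^T^T *m A *m v^T) 0 0.
  by apply: HA; rewrite -(inj_eq (@trmx_inj _ _ _)) trmxK trmx0.
by rewrite trmxK vA mul0mx mxE ltxx.
Qed.

Lemma inv_psd A : pd A -> psd (invmx A).
Proof.
move=> HA; have U := pd_unit HA; case: HA => sA HA.
have sP : (invmx A)^T = invmx A by rewrite trmx_inv sA.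
split => // v; set w := invmx A *m v.
have E : v^T *m invmx A *m v = w^T *m A *m w.
  rewrite /w trmx_mul sP -!mulmxA [A *m _]mulmxA mulmxV // mul1mx.
  by rewrite mulmxA.
rewrite E; have [->|nw] := eqVneq w 0.
  by rewrite mulmx0 mxE.
exact/ltW/HA.
Qed.

Lemma psd_comb A B t : psd A -> psd B -> 0 <= t <= 1 ->
  psd ((1 - t) *: A + t *: B).
Proof.
move=> [sA HA] [sB HB] /andP[t0 t1]; split.
  by rewrite linearD /= !linearZ /= sA sB.
move=> v; rewrite mulmxDr mulmxDl -!scalemxAr -!scalemxAl mxE [X in _ + X]mxE [X in X + _]mxE.
apply: addr_ge0; apply: mulr_ge0; rewrite ?subr_ge0 //.
Qed.

Lemma diag_comb A B t : is_diag_mx A -> is_diag_mx B ->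
  is_diag_mx ((1 - t) *: A + t *: B).
Proof.
move=> /is_diag_mxP HA /is_diag_mxP HB; apply/is_diag_mxP => i j ij.
by rewrite !mxE HA // HB // !mulr0 addr0.
Qed.
Lemma first_order (a b : R) : 0 <= b ->
  (forall t : R, 0 < t <= 1 -> t * a - t ^+ 2 * b <= 0) -> a <= 0.
Proof.
move=> b0 H; rewrite leNgt; apply/negP => a0.
have s0 : 0 < a + b by lra.
set t := a / (a + b).
have ts : t * (a + b) = a by rewrite /t mulfVK // gt_eqF.
have t0 : 0 < t by rewrite /t divr_gt0.
have t1 : t <= 1 by rewrite /t ler_pdivrMr // mul1r; lra.
have := H t; rewrite t0 t1 => /(_ isT) h.
have h2 : a <= t * b.
  have : t * (a - t * b) <= 0 by rewrite mulrBr mulrA -expr2; lra.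
  by rewrite pmulr_rle0 // subr_le0.
nra.
Qed.
End S.
Unset Implicit Arguments.

Theorem proposition13 (R : realFieldType) (n : nat) (Sigma Sh_opt St_opt : 'M[R]_n) :
  pd Sigma ->
  inS Sigma Sh_opt St_opt ->
  (forall Sh St : 'M[R]_n, inS Sigma Sh St -> objective Sigma Sh <= objective Sigma Sh_opt) ->
  forall Sh St : 'M[R]_n, inS Sigma Sh St ->
    \tr ((Sh - Sh_opt) *m invmx Sigma *m (Sh - Sh_opt)^T)
      <= \tr (Sh_opt - Sh_opt *m invmx Sigma *m Sh_opt).
Proof.
move=> pdS [eo [pso [psto dgo]]] opt Sh St [e [psh [pst dg]]].
have U := pd_unit pdS.
have Ppsd := inv_psd pdS.
set P := invmx Sigma in Ppsd *.
have PS : P *m Sigma = 1%:M by rewrite /P mulVmx.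
have SP : Sigma *m P = 1%:M by rewrite /P mulmxV.
have sP : P^T = P by case: Ppsd.
have sSh : Sh^T = Sh by case: psh.
have sSo : Sh_opt^T = Sh_opt by case: pso.
set So := Sh_opt in sSo eo pso opt *.
have XPS : forall X : 'M[R]_n, X *m P *m Sigma = X by move=> X; rewrite -mulmxA PS mulmx1.
have fSh : \tr (Sh *m P *m Sh) <= \tr Sh.
  have := addr_ge0 (tr_psd_ge0 (1%:M - Sh *m P) psh) (tr_psd_ge0 (Sh *m P) pst).
  have -> : St = Sigma - Sh by rewrite e addrC addKr.
  rewrite linearB /= trmx1 trmx_mul sP sSh.
  rewrite !(mulmxBl, mulmxBr, mul1mx, mulmx1, mulmxA) XPS.
  rewrite !(mxtraceD, raddfN, raddfB) /=.
  lra.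
have trT : forall X Y : 'M[R]_n, \tr (X *m P *m Y) = \tr (Y^T *m P *m X^T).
  by move=> X Y; rewrite -mxtrace_tr !trmx_mul sP mulmxA.
have b0 : 0 <= \tr (Sh *m P *m Sh) - \tr (Sh *m P *m So) - \tr (So *m P *m Sh)
              + \tr (So *m P *m So).
  have := tr_psd_ge0 (Sh - So) Ppsd.
  rewrite linearB /= sSh sSo.
  rewrite !(mulmxBl, mulmxBr, mulmxA) !(mxtraceD, raddfN, raddfB) /=.
  lra.
have a0 : \tr Sh - \tr So - \tr (Sh *m P *m So) - \tr (So *m P *m Sh)
           + 2 * \tr (So *m P *m So) <= 0.
  refine (@first_order _ _ _ b0 _) => t /andP[t0 t1].
  have := opt ((1 - t) *: So + t *: Sh) ((1 - t) *: St_opt + t *: St).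
  rewrite /objective.
  have F : inS Sigma ((1 - t) *: So + t *: Sh) ((1 - t) *: St_opt + t *: St).
    split; last split; last split.
    - by rewrite addrACA -!scalerDr -eo -e -scalerDl subrK scale1r.
    - by apply: psd_comb; rewrite // (ltW t0).
    - by apply: psd_comb; rewrite // (ltW t0).
    - exact: diag_comb.
  move=> /(_ F).
  rewrite -/P !(mulmxDl, mulmxDr, mulmxA) -!(scalemxAl, scalemxAr) !scalerA.
  rewrite !mxtraceD !raddfN /= !mxtraceD !mxtraceZ => H.
  lra.
rewrite linearB /= sSh sSo.
rewrite !(mulmxBl, mulmxBr, mulmxA) !(mxtraceD, raddfN, raddfB) /=.
lra.
Qed.
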